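(* For every complex operator ideal $\mathfrak C$ one has $(\mathfrak C_{\mathbb R})_{\mathbb C}\subseteq\mathfrak C$. Moreover, the following are equivalent: (1) $\mathfrak C$ is self conjugate, i.e. $\overline{\mathfrak C}=\mathfrak C$; (2) $(\mathfrak C_{\mathbb R})_{\mathbb C}=\mathfrak C$.
   Context: A Banach space with an $i$-operator is a pair $[X,A]$ with $X$ a real Banach space and $A:X\to X$ bounded linear with $A^2=-I_X$ and $\|\alpha x+\beta Ax\|=\|x\|$ whenever $\alpha^2+\beta^2=1$; these are exactly complex Banach spaces. A bounded linear $T:X\to Y$ with $TA=BT$ is a complex operator $[T,A,B]:[X,A]\to[Y,B]$, and its complex conjugate is $\overline{[T,A,B]}=[T,-A,-B]:[X,-A]\to[Y,-B]$. Real (resp. complex) operator ideals in the sense of Pietsch assign to each pair of real Banach spaces (resp. Banach spaces with an $i$-operator) a linear subspace of bounded (complex) operators containing the finite rank ones and stable under composition on either side with bounded (complex) operators. The conjugate ideal is $\overline{\mathfrak C}=\{\overline{[T,A,B]}:[T,A,B]\in\mathfrak C\}$. For a real Banach space $X$, $N_X(x_1,x_2)=(-x_2,x_1)$ and $[X\oplus X,N_X]$, with norm $\|(x_1,x_2)\|=\left(\frac1{2\pi}\int_{-\pi}^{\pi}\|x_1\cos\phi+x_2\sin\phi\|^2d\phi\right)^{1/2}$, is the complexification of $X$. The real form of $\mathfrak C$ is $\mathfrak C_{\mathbb R}(X,Y)=\{T:X\to Y\text{ bounded linear}:[T\oplus T,N_X,N_Y]\in\mathfrak C([X\oplus X,N_X],[Y\oplus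 Y,N_Y])\}$ with $(T\oplus T)(x_1,x_2)=(Tx_1,Tx_2)$. For a real ideal $\mathfrak R$, its complexification is $\mathfrak R_{\mathbb C}([X,A],[Y,B])=\{[T,A,B]:TA=BT,\ T\in\mathfrak R(X,Y)\}$. *)

(* Defs.v *)
From HB Require Import structures.
From mathcomp Require Import all_boot all_order all_algebra.
From mathcomp Require Import all_classical all_reals all_analysis.
Set Implicit Arguments. Unset Strict Implicit. Unset Printing Implicit Defensive.
Import Order.TTheory GRing.Theory Num.Theory.
Local Open Scope ring_scope.
Local Open Scope classical_set_scope.

Section Defs.
Variable R : realType.

Record nspace := NSpace { carrier :> lmodType R ; nrm : carrier -> R }.

Definition is_banach (X : nspace) : Prop :=
  [/\ (forall x : X, nrm x = 0 -> x = 0),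
      (forall (a : R) (x : X), nrm (a *: x) = `|a| * nrm x),
      (forall x y : X, nrm (x + y) <= nrm x + nrm y) &
      (forall u : nat -> X,
         (forall e : R, 0 < e -> exists N, forall m n, (N <= m)%N -> (N <= n)%N ->
             nrm (u m - u n) < e) ->
         exists l : X, forall e : R, 0 < e -> exists N, forall n, (N <= n)%N ->
             nrm (u n - l) < e)].

Definition bounded_linear (X Y : nspace) (T : X -> Y) : Prop :=
  (forall (a : R) (x y : X), T (a *: x + y) = a *: T x + T y) /\
  (exists M : R, forall x : X, nrm (T x) <= M * nrm x).

Definition finite_rank (X Y : nspace) (T : X -> Y) : Prop :=
  exists (n : nat) (s : 'I_n -> Y), forall x : X,
    exists c : 'I_n -> R, T x = \sum_(i < n) c i *: s i.

Definition iop (X : nspace) (A : X -> X) : Prop :=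
  [/\ bounded_linear A,
      (forall x : X, A (A x) = - x) &
      (forall (a b : R) (x : X), a ^+ 2 + b ^+ 2 = 1 -> nrm (a *: x + b *: A x) = nrm x)].

Definition cop (X Y : nspace) (A : X -> X) (B : Y -> Y) (T : X -> Y) : Prop :=
  bounded_linear T /\ (forall x, T (A x) = B (T x)).

Definition cideal_fam := forall (X Y : nspace), (X -> X) -> (Y -> Y) -> set (X -> Y).

Definition complex_operator_ideal (C : cideal_fam) : Prop :=
  forall (X Y : nspace) (A : X -> X) (B : Y -> Y),
    is_banach X -> is_banach Y -> iop A -> iop B ->
  [/\ (forall T, C X Y A B T -> cop A B T),
      (forall T, cop A B T -> finite_rank T -> C X Y A B T),
      (forall T1 T2, C X Y A B T1 -> C X Y A B T2 -> C X Y A B (fun x => T1 x + T2 x)),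
      (forall (a b : R) T, C X Y A B T -> C X Y A B (fun x => a *: T x + b *: B (T x))) &
      (forall (W Z : nspace) (Aw : W -> W) (Bz : Z -> Z) (S : W -> X) (U : Y -> Z) T,
         is_banach W -> is_banach Z -> iop Aw -> iop Bz ->
         cop Aw A S -> C X Y A B T -> cop B Bz U ->
         C W Z Aw Bz (fun w => U (T (S w))))].

Definition cplx_norm (X : nspace) (x : (X * X)%type) : R :=
  Num.sqrt ((2 * pi)^-1 *
    fine (\int[lebesgue_measure]_(t in [set t : R | - pi <= t <= pi])
             ((nrm (cos t *: x.1 + sin t *: x.2)) ^+ 2)%:E)).

Definition cplx (X : nspace) : nspace := @NSpace (X * X)%type (@cplx_norm X).

Definition NX (X : nspace) : cplx X -> cplx X := fun x => (- x.2, x.1).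

Definition dsum (X Y : nspace) (T : X -> Y) : cplx X -> cplx Y :=
  fun x => (T x.1, T x.2).

Definition real_form (C : cideal_fam) (X Y : nspace) : set (X -> Y) :=
  [set T | bounded_linear T /\ C (cplx X) (cplx Y) (@NX X) (@NX Y) (dsum T)].

Definition complexify (Rr : forall X Y : nspace, set (X -> Y)) : cideal_fam :=
  fun X Y A B => [set T | (forall x, T (A x) = B (T x)) /\ Rr X Y T].

Definition conj_ideal (C : cideal_fam) : cideal_fam :=
  fun X Y A B => C X Y (fun x => - A x) (fun y => - B y).

Definition cideal_sub (C1 C2 : cideal_fam) : Prop :=
  forall (X Y : nspace) (A : X -> X) (B : Y -> Y),
    is_banach X -> is_banach Y -> iop A -> iop B -> C1 X Y A B `<=` C2 X Y A B.

Definition cideal_eq (C1 C2 : cideal_fam) : Prop :=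
  forall (X Y : nspace) (A : X -> X) (B : Y -> Y),
    is_banach X -> is_banach Y -> iop A -> iop B -> C1 X Y A B = C2 X Y A B.

Definition self_conjugate (C : cideal_fam) : Prop := cideal_eq (conj_ideal C) C.

End Defs.

(* Main.v *)
Require Import Defs.
From mathcomp Require Import all_boot all_order all_algebra.
From mathcomp Require Import all_classical all_reals all_analysis.
From HB Require Import structures.
From mathcomp Require Import ring lra.
Set Implicit Arguments. Unset Strict Implicit. Unset Printing Implicit Defensive.
Import Order.TTheory GRing.Theory Num.Theory.
Import numFieldNormedType.Exports.
Local Open Scope ring_scope.
Local Open Scope classical_set_scope.


Section S0.
Variable R : realType.
Notation mu := (@lebesgue_measure R).

Lemma dshift (c : R) : (fun x : R => x + c)^`()%classic = cst 1.
Proof.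
apply/funext => x; rewrite derive1E.
by rewrite deriveD// derive_id derive_cst addr0.
Qed.

Lemma shift_int (f : R -> R) (c a b : R) : a <= b -> continuous f ->
  \int[mu]_(x in `[a + c, b + c]) f x = \int[mu]_(x in `[a, b]) f (x + c).
Proof.
move=> ab cf; rewrite /Rintegral.
rewrite (@integration_by_substitution_increasing R (fun x => x + c) f a b ab).
- congr fine; apply: eq_integral => x _.
  by rewrite /= dshift /= mulr1.
- by move=> x y _ _; rewrite ltrD2r.
- by rewrite dshift => x _; exact: cst_continuous.
- by rewrite dshift; exact: is_cvg_cst.
- by rewrite dshift; exact: is_cvg_cst.
- split.
  + by move=> x _; apply: derivableD.
  + apply: cvg_at_right_filter; apply: cvgD; [exact: cvg_id| exact: cvg_cst].
  + apply: cvg_at_left_filter; apply: cvgD; [exact: cvg_id| exact: cvg_cst].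
- exact: continuous_subspaceT.
Qed.

Lemma cont_int (f : R -> R) (a b : R) : continuous f ->
  mu.-integrable `[a, b] (EFin \o f).
Proof.
move=> cf; apply: continuous_compact_integrable; first exact: segment_compact.
exact: continuous_subspaceT.
Qed.

Lemma split_int (f : R -> R) (a m b : R) : a <= m -> m <= b -> continuous f ->
  \int[mu]_(x in `[a, b]) f x =
  \int[mu]_(x in `[a, m]) f x + \int[mu]_(x in `[m, b]) f x.
Proof.
move=> am mb cf.
have := @Rintegral_itvB R f (BLeft a) (BRight b) m (cont_int _ _ cf).
rewrite !bnd_simp => /(_ am mb) => h.
rewrite -(@Rintegral_itv_obnd_cbnd R m (BRight b) f); last first.
  apply: integrableS (cont_int m b cf) => //; apply/subset_itvP => x.
  by rewrite /= !in_itv/= => /andP[/ltW -> ->].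
by rewrite -h addrC subrK.
Qed.

Lemma periodic_shift0 (f : R -> R) (c : R) : continuous f ->
  (forall x, f (x + pi *+ 2) = f x) -> 0 <= c <= pi *+ 2 ->
  \int[mu]_(x in `[- pi, pi]) f (x + c) = \int[mu]_(x in `[- pi, pi]) f x.
Proof.
move=> cf fp /andP[c0 c2].
have pi0 := @pi_ge0 R.
rewrite -shift_int; last 2 first.
- lra.
- exact: cf.
rewrite (@split_int f (- pi + c) pi); last 3 first.
- rewrite mulr2n in c2; lra.
- lra.
- exact: cf.
have e1 : pi = - pi + pi *+ 2 :> R by rewrite mulr2n; lra.
have e2 : pi + c = (- pi + c) + pi *+ 2 :> R by rewrite mulr2n; lra.
rewrite [in X in _ + X = _]e2 [in X in _ + \int[mu]_(x in `[X, _]) _ = _]e1.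
rewrite shift_int; last 2 first.
- lra.
- exact: cf.
under [in X in _ + X]eq_Rintegral do rewrite fp.
rewrite addrC -split_int //; last first.
- rewrite mulr2n in c2; lra.
- lra.
Qed.

Lemma periodic_shift (f : R -> R) (c : R) : continuous f ->
  (forall x, f (x + pi *+ 2) = f x) -> - (pi *+ 2) <= c <= pi *+ 2 ->
  \int[mu]_(x in `[- pi, pi]) f (x + c) = \int[mu]_(x in `[- pi, pi]) f x.
Proof.
move=> cf fp /andP[c1 c2].
have [c0|c0] := leP 0 c; first by apply: periodic_shift0 => //; rewrite c0.
rewrite -(periodic_shift0 (c := c + pi *+ 2) cf fp).
  by apply: eq_Rintegral => x _; rewrite addrA fp.
rewrite mulr2n in c1 c2 *; lra.
Qed.
End S0.


Section N.
Variable R : realType.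
Notation mu := (@lebesgue_measure R).
Variable X : nspace R.
Hypothesis hX : is_banach X.

Lemma nrmZ (a : R) (x : X) : nrm (a *: x) = `|a| * nrm x.
Proof. by case: hX. Qed.
Lemma nrmD (x y : X) : nrm (x + y) <= nrm x + nrm y.
Proof. by case: hX. Qed.
Lemma nrm0 : nrm (0 : X) = 0.
Proof. by rewrite -(scale0r (0 : X)) nrmZ normr0 mul0r. Qed.
Lemma nrmN (x : X) : nrm (- x) = nrm x.
Proof. by rewrite -scaleN1r nrmZ normrN normr1 mul1r. Qed.
Lemma nrm_ge0 (x : X) : 0 <= nrm x.
Proof.
have := nrmD x (- x); rewrite subrr nrm0 nrmN; lra.
Qed.
Lemma nrm_eq0 (x : X) : nrm x = 0 -> x = 0.
Proof. by case: hX => h _ _ _; apply: h. Qed.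
Lemma nrm_lip (x y : X) : `|nrm x - nrm y| <= nrm (x - y).
Proof.
rewrite ler_norml; apply/andP; split.
- have := nrmD (y - x) x; rewrite subrK -opprB nrmN; lra.
- have := nrmD (x - y) y; rewrite subrK; lra.
Qed.

Lemma nrm_comb (a b : R) (x1 x2 : X) :
  nrm (a *: x1 + b *: x2) <= `|a| * nrm x1 + `|b| * nrm x2.
Proof. by rewrite -!nrmZ nrmD. Qed.

Lemma cont_nrm (p q : R -> R) (x1 x2 : X) : continuous p -> continuous q ->
  continuous (fun t => nrm (p t *: x1 + q t *: x2)).
Proof.
move=> cp cq s; apply/cvgrPdist_lt => e e0.
set K := nrm x1 + nrm x2 + 1.
have K0 : 0 < K by rewrite /K; have := nrm_ge0 x1; have := nrm_ge0 x2; lra.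
have eK : 0 < e / K by rewrite divr_gt0.
have := cp s; move/cvgrPdist_lt => /(_ _ eK) hp.
have := cq s; move/cvgrPdist_lt => /(_ _ eK) hq.
near=> t.
have h1 : `|p s - p t| < e / K by near: t.
have h2 : `|q s - q t| < e / K by near: t.
apply: (le_lt_trans (nrm_lip _ _)).
have -> : p s *: x1 + q s *: x2 - (p t *: x1 + q t *: x2) =
          (p s - p t) *: x1 + (q s - q t) *: x2.
  by rewrite !scalerBl opprD addrACA.
apply: (le_lt_trans (nrm_comb _ _ _ _)).
have n1 := nrm_ge0 x1; have n2 := nrm_ge0 x2.
have hK : e / K * K = e by rewrite divfK// gt_eqF.
move: hK eK h1 h2; rewrite /K; set u := e / K => hK eK h1 h2.
have l1 : `|p s - p t| * nrm x1 <= u * nrm x1 by rewrite ler_wpM2r // ltW.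
have l2 : `|q s - q t| * nrm x2 <= u * nrm x2 by rewrite ler_wpM2r // ltW.
rewrite !mulrDr mulr1 in hK; lra.
Unshelve. all: end_near.
Qed.

Lemma cont_nrm2 (p q : R -> R) (x1 x2 : X) : continuous p -> continuous q ->
  continuous (fun t => nrm (p t *: x1 + q t *: x2) ^+ 2).
Proof.
move=> cp cq s.
apply: (@continuous_comp _ _ _ (fun t => nrm (p t *: x1 + q t *: x2)) (fun z => z ^+ 2)).
  exact: cont_nrm.
exact: exprn_continuous.
Qed.

Notation cn := (@cplx_norm R X).

Definition hv (x : X * X) (t : R) := nrm (cos t *: x.1 + sin t *: x.2).
Definition Q (x : X * X) := \int[mu]_(t in `[- pi, pi]) (hv x t ^+ 2).

Lemma cont_hv2 x : continuous (fun t => hv x t ^+ 2).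
Proof. apply: cont_nrm2; [exact: continuous_cos | exact: continuous_sin]. Qed.

Lemma per_hv2 x t : hv x (t + pi *+ 2) ^+ 2 = hv x t ^+ 2.
Proof. by rewrite /hv cosD2pi sinD2pi. Qed.

Lemma setE : [set t : R | - pi <= t <= pi] = `[- pi, pi].
Proof. by apply/seteqP; split => t /=; rewrite in_itv. Qed.

Lemma muI : fine (mu `[- pi, pi]) = 2 * pi.
Proof.
rewrite lebesgue_measure_itv /= lte_fin.
have pi0 := @pi_gt0 R.
rewrite ifT; last by lra.
rewrite opprK /=; lra.
Qed.

Lemma Q_ge0 x : 0 <= Q x.
Proof. by apply: Rintegral_ge0 => t _; exact: sqr_ge0. Qed.

Lemma cnE x : cn x = Num.sqrt ((2 * pi)^-1 * Q x).
Proof. by rewrite /cplx_norm setE. Qed.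

Lemma cn_ge0 x : 0 <= cn x.
Proof. by rewrite cnE sqrtr_ge0. Qed.

Lemma cn_sq x : cn x ^+ 2 = (2 * pi)^-1 * Q x.
Proof.
rewrite cnE sqr_sqrtr // mulr_ge0 // ?Q_ge0 // invr_ge0 mulr_ge0 //.
exact: pi_ge0.
Qed.

Lemma QE x : Q x = 2 * pi * cn x ^+ 2.
Proof.
rewrite cn_sq mulrA mulfV ?mul1r //.
have := @pi_gt0 R; lra.
Qed.

Lemma sq_le (u v : R) : 0 <= v -> u ^+ 2 <= v ^+ 2 -> u <= v.
Proof. move=> v0 h; nra. Qed.

Lemma cn_upper x : cn x <= nrm x.1 + nrm x.2.
Proof.
have n1 := nrm_ge0 x.1; have n2 := nrm_ge0 x.2.
apply: sq_le; first lra.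
have pi0 := @pi_gt0 R.
have : Q x <= \int[mu]_(t in `[- pi, pi]) ((nrm x.1 + nrm x.2) ^+ 2).
  apply: le_Rintegral => //.
  - apply: cont_int; exact: cont_hv2.
  - apply: cont_int; exact: cst_continuous.
  move=> t _; rewrite /hv.
  have h := nrm_comb (cos t) (sin t) x.1 x.2.
  have := cos_max t; have := sin_max t.
  have := nrm_ge0 (cos t *: x.1 + sin t *: x.2).
  move: h; set a := `|cos t|; set b := `|sin t|; set w := nrm _.
  have a0 : 0 <= a by exact: normr_ge0.
  have b0 : 0 <= b by exact: normr_ge0.
  move=> h w0 b1 a1.
  have l1 : a * nrm x.1 <= nrm x.1 by rewrite ler_piMl.
  have l2 : b * nrm x.2 <= nrm x.2 by rewrite ler_piMl.
  have : w <= nrm x.1 + nrm x.2 by lra.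
  move=> h2; nra.
rewrite Rintegral_cst // muI QE => h.
have : 2 * pi * (cn x ^+ 2 - (nrm x.1 + nrm x.2) ^+ 2) <= 0 by lra.
rewrite pmulr_rle0; [lra | lra].
Qed.

Lemma cont_shift (f : R -> R) (c : R) : continuous f -> continuous (fun t => f (t + c)).
Proof.
move=> cf s; apply: (@continuous_comp _ _ _ (fun t => t + c) f).
  by apply: cvgD; [exact: cvg_id | exact: cvg_cst].
exact: cf.
Qed.

Lemma int_bound (k : R) (g1 g2 : R -> R) : continuous g1 -> continuous g2 ->
  (forall t, k <= 2 * (g1 t + g2 t)) ->
  k * (2 * pi) <= 2 * (\int[mu]_(t in `[- pi, pi]) g1 t + \int[mu]_(t in `[- pi, pi]) g2 t).
Proof.
move=> c1 c2 h.
rewrite -muI -Rintegral_cst // -RintegralD //; try by apply: cont_int.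
rewrite -RintegralZl //; last first.
  apply: cont_int => s; apply: cvgD; [exact: c1 | exact: c2].
apply: le_Rintegral => //.
- by apply: cont_int; exact: cst_continuous.
- apply: cont_int => s; apply: cvgM; first exact: cvg_cst.
  apply: cvgD; [exact: c1 | exact: c2].
Qed.

Lemma scal2 (p q r : R) (u w : X) : p *: (q *: u + r *: w) = (p * q) *: u + (p * r) *: w.
Proof. by rewrite scalerDr !scalerA. Qed.
Lemma vec2 (a b c d : R) (u w : X) :
  a *: u + b *: w + (c *: u + d *: w) = (a + c) *: u + (b + d) *: w.
Proof. by rewrite addrACA !scalerDl. Qed.

Lemma hv_pihalf x t : hv x (t + pi / 2) = nrm ((- sin t) *: x.1 + cos t *: x.2).
Proof. by rewrite /hv cosDpihalf sinDpihalf. Qed.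

Lemma pt_lower x t : nrm x.1 <= hv x t + hv x (t + pi / 2) /\
                     nrm x.2 <= hv x t + hv x (t + pi / 2).
Proof.
have cs := cos2Dsin2 t.
have hc := cos_max t; have hs := sin_max t.
have g1 := nrm_ge0 (cos t *: x.1 + sin t *: x.2).
have g2 := nrm_ge0 ((- sin t) *: x.1 + cos t *: x.2).
rewrite hv_pihalf /hv; split.
- have e : x.1 = cos t *: (cos t *: x.1 + sin t *: x.2) +
             (- sin t) *: ((- sin t) *: x.1 + cos t *: x.2).
    rewrite !scal2 vec2.
    have -> : cos t * cos t + - sin t * - sin t = 1 by rewrite mulrNN -!expr2.
    have -> : cos t * sin t + - sin t * cos t = 0 by rewrite mulNr mulrC subrr.
    by rewrite scale1r scale0r addr0.
  rewrite {1}e; apply: (le_trans (nrm_comb _ _ _ _)); rewrite normrN.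
  set a := nrm _; set b := nrm _.
  rewrite -/a -/b in g1 g2.
  have l1 : `|cos t| * a <= a by rewrite ler_piMl.
  have l2 : `|sin t| * b <= b by rewrite ler_piMl.
  lra.
- have e : x.2 = sin t *: (cos t *: x.1 + sin t *: x.2) +
             cos t *: ((- sin t) *: x.1 + cos t *: x.2).
    rewrite !scal2 vec2.
    have -> : sin t * cos t + cos t * - sin t = 0 by rewrite mulrN mulrC subrr.
    have -> : sin t * sin t + cos t * cos t = 1 by rewrite -!expr2 addrC.
    by rewrite scale1r scale0r add0r.
  rewrite {1}e; apply: (le_trans (nrm_comb _ _ _ _)).
  set a := nrm _; set b := nrm _.
  rewrite -/a -/b in g1 g2.
  have l1 : `|sin t| * a <= a by rewrite ler_piMl.
  have l2 : `|cos t| * b <= b by rewrite ler_piMl.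
  lra.
Qed.

Lemma Q_pihalf x : \int[mu]_(t in `[- pi, pi]) (hv x (t + pi / 2) ^+ 2) = Q x.
Proof.
rewrite /Q; apply: (periodic_shift (f := fun t => hv x t ^+ 2)).
- exact: cont_hv2.
- exact: per_hv2.
- have := @pi_gt0 R; rewrite mulr2n; lra.
Qed.

Lemma cn_lower x : nrm x.1 <= 2 * cn x /\ nrm x.2 <= 2 * cn x.
Proof.
have pi0 := @pi_gt0 R.
have c0 := cn_ge0 x.
have key : forall k, 0 <= k -> (forall t, k <= hv x t + hv x (t + pi / 2)) -> k <= 2 * cn x.
  move=> k k0 hk.
  have := @int_bound (k ^+ 2) (fun t => hv x t ^+ 2) (fun t => hv x (t + pi / 2) ^+ 2).
  rewrite Q_pihalf -/(Q x) QE => h.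
  have {}h : k ^+ 2 * (2 * pi) <= 2 * (2 * pi * cn x ^+ 2 + 2 * pi * cn x ^+ 2).
    apply: h.
    - exact: cont_hv2.
    - apply: (cont_shift (f := fun t => hv x t ^+ 2)); exact: cont_hv2.
    - move=> t; have := hk t.
      have := nrm_ge0 (cos t *: x.1 + sin t *: x.2).
      have := nrm_ge0 (cos (t + pi / 2) *: x.1 + sin (t + pi / 2) *: x.2).
      rewrite /hv; set a := nrm _; set b := nrm _ => b0 a0 hk'.
      have h1 : k * k <= (b + a) * (b + a) by apply: ler_pM.
      have h2 := sqr_ge0 (b - a).
      rewrite !expr2 in h2 *; nra.
  apply: sq_le; first lra.
  have : (2 * pi) * (k ^+ 2 - (2 * cn x) ^+ 2) <= 0 by lra.
  rewrite pmulr_rle0; lra.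
split; apply: key; try exact: nrm_ge0; move=> t; have [] := pt_lower x t => //.
Qed.

Lemma sq_eq (u v : R) : 0 <= u -> 0 <= v -> u ^+ 2 = v ^+ 2 -> u = v.
Proof. move=> u0 v0 h; apply/le_anti/andP; split; apply: sq_le => //; lra. Qed.

Lemma int_lin (al be : R) (g1 g2 : R -> R) : continuous g1 -> continuous g2 ->
  \int[mu]_(t in `[- pi, pi]) (al * g1 t + be * g2 t) =
  al * \int[mu]_(t in `[- pi, pi]) g1 t + be * \int[mu]_(t in `[- pi, pi]) g2 t.
Proof.
move=> c1 c2.
have i1 := cont_int (- pi) pi c1; have i2 := cont_int (- pi) pi c2.
rewrite RintegralD //.
- by rewrite !RintegralZl.
- apply: cont_int => s; apply: cvgM; [exact: cvg_cst | exact: c1].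
- apply: cont_int => s; apply: cvgM; [exact: cvg_cst | exact: c2].
Qed.

Lemma hvZ (a : R) x t : hv (a *: x) t = `|a| * hv x t.
Proof.
rewrite /hv /= -nrmZ; congr nrm.
by rewrite scalerDr !scalerA (mulrC a) (mulrC a).
Qed.

Lemma cnZ (a : R) x : cn (a *: x) = `|a| * cn x.
Proof.
apply: sq_eq; first exact: cn_ge0.
  by apply: mulr_ge0; [exact: normr_ge0 | exact: cn_ge0].
have pi0 := @pi_gt0 R.
have h : Q (a *: x) = a ^+ 2 * Q x.
  rewrite /Q -RintegralZl //; last by apply: cont_int; exact: cont_hv2.
  apply: eq_Rintegral => t _; rewrite hvZ exprMn real_normK //; exact: num_real.
rewrite cn_sq h exprMn real_normK ?num_real // cn_sq; ring.
Qed.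

Lemma cn_eq0 x : cn x = 0 -> x = 0.
Proof.
move=> h; have [l1 l2] := cn_lower x; rewrite h mulr0 in l1 l2.
have e1 : x.1 = 0 by apply: nrm_eq0; apply/le_anti; rewrite l1 nrm_ge0.
have e2 : x.2 = 0 by apply: nrm_eq0; apply/le_anti; rewrite l2 nrm_ge0.
by case: x e1 e2 {h l1 l2} => x1 x2 /= -> ->.
Qed.

Lemma hvD x y t : hv (x + y) t <= hv x t + hv y t.
Proof.
rewrite /hv /=; apply: le_trans (nrmD _ _).
by rewrite !scalerDr addrACA.
Qed.

Lemma cnD x y : cn (x + y) <= cn x + cn y.
Proof.
have cn0 : cn 0 = 0.
  by rewrite -(scale0r (0 : X * X)) cnZ normr0 mul0r.
have [x0|x0] := eqVneq (cn x) 0.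
  by rewrite (cn_eq0 x0) add0r cn0 add0r.
have [y0|y0] := eqVneq (cn y) 0.
  by rewrite (cn_eq0 y0) addr0 cn0 addr0.
have ax : 0 < cn x by rewrite lt_neqAle eq_sym x0 cn_ge0.
have ay : 0 < cn y by rewrite lt_neqAle eq_sym y0 cn_ge0.
have pi0 := @pi_gt0 R.
set s := cn y / cn x.
have s0 : 0 < s by rewrite divr_gt0.
have hQ : Q (x + y) <= (1 + s) * Q x + (1 + s^-1) * Q y.
  rewrite -int_lin; try exact: cont_hv2.
  apply: le_Rintegral => //.
  - apply: cont_int; exact: cont_hv2.
  - apply: cont_int => r; apply: cvgD; (apply: cvgM; [exact: cvg_cst | exact: cont_hv2]).
  move=> t _.
  have hz := hvD x y t.
  have z0 : 0 <= hv (x + y) t by exact: nrm_ge0.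
  have u0 : 0 <= hv x t by exact: nrm_ge0.
  have w0 : 0 <= hv y t by exact: nrm_ge0.
  move: hz z0 u0 w0; set z := hv _ t; set u := hv x t; set w := hv y t => hz z0 u0 w0.
  have e : (1 + s) * u ^+ 2 + (1 + s^-1) * w ^+ 2 - (u + w) ^+ 2 = (s * u - w) ^+ 2 / s.
    by field; rewrite gt_eqF.
  have : 0 <= (s * u - w) ^+ 2 / s by rewrite divr_ge0 // ?sqr_ge0 // ltW.
  rewrite -e => h1.
  have h2 : z * z <= (u + w) * (u + w) by apply: ler_pM.
  rewrite !expr2 in h1 *; lra.
rewrite !QE in hQ.
have e : (1 + s) * (2 * pi * cn x ^+ 2) + (1 + s^-1) * (2 * pi * cn y ^+ 2) =
         2 * pi * (cn x + cn y) ^+ 2.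
  by rewrite /s; field; rewrite !gt_eqF.
rewrite e in hQ.
apply: sq_le; first by have := cn_ge0 x; have := cn_ge0 y; lra.
have : (2 * pi) * (cn (x + y) ^+ 2 - (cn x + cn y) ^+ 2) <= 0 by lra.
rewrite pmulr_rle0; lra.
Qed.

Lemma angle (a b : R) : a ^+ 2 + b ^+ 2 = 1 ->
  exists th, [/\ cos th = a, sin th = b & - pi <= th <= pi].
Proof.
move=> h.
have a1 : -1 <= a <= 1 by apply/andP; split; nra.
have ain : a \in `[(-1), 1]%R by rewrite in_itv/=.
have sa : Num.sqrt (1 - a ^+ 2) = `|b|.
  by rewrite -sqrtr_sqr; congr Num.sqrt; lra.
have g0 := acos_ge0 a1; have gp := acos_lepi a1.
have [b0|b0] := leP 0 b.
- exists (acos a); split => //; first exact: acosK.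
  + by rewrite sin_acos // sa ger0_norm.
  + apply/andP; split => //; have := @pi_ge0 R; lra.
- exists (- acos a); split.
  + by rewrite cosN acosK.
  + by rewrite sinN sin_acos // sa ltr0_norm // opprK.
  + apply/andP; split; lra.
Qed.

Lemma cn_rot (a b : R) (x : X * X) : a ^+ 2 + b ^+ 2 = 1 ->
  cn (a *: x + b *: (- x.2, x.1)) = cn x.
Proof.
move=> /angle [th [ca sb thr]].
have pi0 := @pi_gt0 R.
apply: sq_eq; try exact: cn_ge0.
rewrite !cn_sq; congr (_ * _).
rewrite /Q -(periodic_shift (c := - th) (f := fun t => hv x t ^+ 2)); last 3 first.
- exact: cont_hv2.
- exact: per_hv2.
- rewrite mulr2n; move/andP: thr => [? ?]; apply/andP; split; lra.
apply: eq_Rintegral => t _; rewrite /hv /=; congr (nrm _ ^+ 2).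
rewrite cosD sinD cosN sinN ca sb scalerN -scaleNr.
rewrite [a *: x.2 + _]addrC !scal2 vec2.
congr (_ *: _ + _ *: _); ring.
Qed.

Lemma cn_complete (u : nat -> X * X) :
  (forall e : R, 0 < e -> exists N, forall m n, (N <= m)%N -> (N <= n)%N ->
      cn (u m - u n) < e) ->
  exists l : X * X, forall e : R, 0 < e -> exists N, forall n, (N <= n)%N ->
      cn (u n - l) < e.
Proof.
move=> hu.
have comp : forall (v : nat -> X), (forall e : R, 0 < e -> exists N, forall m n, (N <= m)%N -> (N <= n)%N ->
         nrm (v m - v n) < e) ->
       exists l : X, forall e : R, 0 < e -> exists N, forall n, (N <= n)%N ->
         nrm (v n - l) < e by case: hX.
have [l1 hl1] : exists l : X, forall e : R, 0 < e -> exists N, forall n, (N <= n)%N ->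
         nrm ((u n).1 - l) < e.
  apply: comp => e e0.
  have [N hN] := hu (e / 2) (ltac:(lra) : 0 < e / 2).
  exists N => m n hm hn.
  have [h1 _] := cn_lower (u m - u n).
  have := hN m n hm hn; simpl in h1; lra.
have [l2 hl2] : exists l : X, forall e : R, 0 < e -> exists N, forall n, (N <= n)%N ->
         nrm ((u n).2 - l) < e.
  apply: comp => e e0.
  have [N hN] := hu (e / 2) (ltac:(lra) : 0 < e / 2).
  exists N => m n hm hn.
  have [_ h2] := cn_lower (u m - u n).
  have := hN m n hm hn; simpl in h2; lra.
exists (l1, l2) => e e0.
have [N1 h1] := hl1 (e / 2) (ltac:(lra) : 0 < e / 2).
have [N2 h2] := hl2 (e / 2) (ltac:(lra) : 0 < e / 2).
exists (maxn N1 N2) => n hn.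
have := cn_upper (u n - (l1, l2)); simpl.
have := h1 n (leq_trans (leq_maxl _ _) hn).
have := h2 n (leq_trans (leq_maxr _ _) hn).
lra.
Qed.

Lemma cplx_banach : is_banach (cplx X).
Proof.
split.
- exact: cn_eq0.
- exact: cnZ.
- exact: cnD.
- exact: cn_complete.
Qed.

Lemma NX_iop : iop (@NX R X).
Proof.
have rot := cn_rot.
split.
- split.
  + move=> a x y; rewrite /NX /=.
    change ((- (a *: x.2 + y.2), a *: x.1 + y.1) = (a *: - x.2 + - y.2, a *: x.1 + y.1)).
    by rewrite opprD scalerN.
  + exists 1 => x; rewrite mul1r.
    have h : cn (- x.2, x.1) = cn x.
      have := rot 0 1 x; rewrite scale0r add0r scale1r; apply.
      by rewrite expr0n /= add0r expr1n.
    by change (cn (- x.2, x.1) <= cn x); rewrite h.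
- by case=> x1 x2.
- move=> a b x h; exact: rot.
Qed.
End N.


Section L.
Variable R : realType.
Variables X Y : nspace R.
Variable T : X -> Y.
Hypothesis lin : forall (a : R) (x y : X), T (a *: x + y) = a *: T x + T y.

Lemma T0 : T 0 = 0.
Proof.
have h := lin 1 0 0; rewrite !scale1r addr0 in h.
by apply: (addrI (T 0)); rewrite addr0 -h.
Qed.
Lemma TD x y : T (x + y) = T x + T y.
Proof. by have := lin 1 x y; rewrite !scale1r. Qed.
Lemma TZ a x : T (a *: x) = a *: T x.
Proof. by have := lin a x 0; rewrite !addr0 T0 addr0. Qed.
Lemma TN x : T (- x) = - T x.
Proof. by rewrite -scaleN1r TZ scaleN1r. Qed.
End L.

Section M.
Variable R : realType.

Lemma half2 (Y : lmodType R) (v : Y) : (2 : R)^-1 *: (v + v) = v.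
Proof.
have -> : v + v = (2 : R) *: v by rewrite scalerDl !scale1r.
by rewrite scalerA mulVf ?scale1r // pnatr_eq0.
Qed.

Lemma iopN (X : nspace R) (A : X -> X) : is_banach X -> iop A -> iop (fun x => - A x).
Proof.
move=> hX [[lin [M hM]] AA rot].
split.
- split.
  + by move=> a x y; rewrite lin opprD scalerN.
  + by exists M => x; rewrite nrmN.
- by move=> x; rewrite TN // opprK AA.
- move=> a b x h; rewrite scalerN -scaleNr; apply: rot; rewrite sqrrN //.
Qed.

Lemma S_cop (X : nspace R) (A : X -> X) : is_banach X -> iop A ->
  cop A (@NX R X) ((fun x => (x, - A x)) : X -> cplx X).
Proof.
move=> hX [[lin [M hM]] AA rot].
split.
- split.
  + move=> a x y.
    change ((a *: x + y, - A (a *: x + y)) = (a *: x + y, a *: - A x + - A y)).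
    by rewrite lin opprD scalerN.
  + exists (1 + `|M|) => x.
    change (cplx_norm (x, - A x) <= (1 + `|M|) * nrm x).
    apply: le_trans (cn_upper hX _) _ => /=.
    rewrite nrmN // mulrDl mul1r lerD2l.
    apply: le_trans (hM x) _; apply: ler_wpM2r; first exact: nrm_ge0.
    exact: ler_norm.
- move=> x; rewrite /NX /= AA opprK.
  by rewrite opprK.
Qed.

Lemma U_cop (Y : nspace R) (B : Y -> Y) : is_banach Y -> iop B ->
  cop (@NX R Y) B ((fun y => (2 : R)^-1 *: (y.1 + B y.2)) : cplx Y -> Y).
Proof.
move=> hY [[lin [M hM]] BB rot].
split.
- split.
  + move=> a x y.
    change ((2 : R)^-1 *: (a *: x.1 + y.1 + B (a *: x.2 + y.2)) =
            a *: ((2 : R)^-1 *: (x.1 + B x.2)) + (2 : R)^-1 *: (y.1 + B y.2)).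
    rewrite lin scalerA mulrC -scalerA -scalerDr; congr (_ *: _).
    by rewrite scalerDr addrACA.
  + exists (1 + `|M|) => y.
    change (nrm ((2 : R)^-1 *: (y.1 + B y.2)) <= (1 + `|M|) * cplx_norm y).
    have [l1 l2] := cn_lower hY y.
    have c0 := cn_ge0 y.
    rewrite nrmZ // ger0_norm ?invr_ge0 //.
    apply: le_trans (ler_wpM2l _ (nrmD hY _ _)) _; first by rewrite invr_ge0.
    have h2 : nrm (B y.2) <= `|M| * (2 * cplx_norm y).
      apply: le_trans (hM _) _.
      apply: le_trans (ler_wpM2r (nrm_ge0 hY _) (ler_norm M)) _.
      by apply: ler_wpM2l => //; exact: normr_ge0.
    have m0 : 0 <= `|M| := normr_ge0 M.
    set c := cplx_norm y in l1 l2 h2 c0 *.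
    set n1 := nrm y.1 in l1 *; set n2 := nrm (B y.2) in h2 *.
    have -> : (1 + `|M|) * c = 2^-1 * (2 * c + `|M| * (2 * c)) by field.
    by rewrite ler_wpM2l ?invr_ge0 // lerD.
- move=> y; rewrite /NX /=.
  by rewrite (TZ lin) (TD lin) BB addrC.
Qed.
End M.


Lemma pairD (R : realType) (Y : lmodType R) (a b c d : Y) :
  ((a, b) : Y * Y) + (c, d) = (a + c, b + d).
Proof. by []. Qed.

Lemma cast_set (T : Type) (P : set T) (F G : T) : P F -> F = G -> P G.
Proof. by move=> h <-. Qed.

Theorem theorem2 (R : realType) (C : cideal_fam R) :
  complex_operator_ideal C ->
  cideal_sub (complexify (real_form C)) C /\
  (self_conjugate C <-> cideal_eq (complexify (real_form C)) C).
Proof.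
move=> hC.
have part1 : cideal_sub (complexify (real_form C)) C.
  move=> X Y A B hX hY hA hB T [hTA [hT hTC]].
  have [_ _ _ _ comp] := hC (cplx X) (cplx Y) (@NX R X) (@NX R Y)
    (cplx_banach hX) (cplx_banach hY) (NX_iop hX) (NX_iop hY).
  apply: (cast_set (comp X Y A B _ _ _ hX hY hA hB (S_cop hX hA) hTC (U_cop hY hB))).
  apply/funext => w /=.
  have [[linT _] _] := (conj hT hTC).
  have [[linB _] BB _] := hB.
  by rewrite (TN linT) hTA (TN linB) BB opprK half2.
split => //; split.
- move=> hsc X Y A B hX hY hA hB; apply/seteqP; split; first exact: part1.
  move=> T hT.
  have [hcop _ _ _ comp] := hC X Y A B hX hY hA hB.
  have [[linT bT] hTA] := hcop T hT.
  split; first exact: hTA.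
  split; first by split.
  have hT' : C X Y (fun x => - A x) (fun y => - B y) T.
    by move: hT; rewrite -(hsc X Y A B hX hY hA hB).
  have hAn := iopN hX hA; have hBn := iopN hY hB.
  have [_ _ _ _ compN] := hC X Y _ _ hX hY hAn hBn.
  have k1 := comp (cplx X) (cplx Y) (@NX R X) (@NX R Y) _ _ _
    (cplx_banach hX) (cplx_banach hY) (NX_iop hX) (NX_iop hY) (U_cop hX hA) hT (S_cop hY hB).
  have k2 := compN (cplx X) (cplx Y) (@NX R X) (@NX R Y) _ _ _
    (cplx_banach hX) (cplx_banach hY) (NX_iop hX) (NX_iop hY) (U_cop hX hAn) hT' (S_cop hY hBn).
  have [_ _ hsum _ _] := hC (cplx X) (cplx Y) (@NX R X) (@NX R Y)
    (cplx_banach hX) (cplx_banach hY) (NX_iop hX) (NX_iop hY).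
  apply: (cast_set (hsum _ _ k1 k2)).
  apply/funext => x /=.
  have [[linB _] BB _] := hB.
  rewrite pairD /dsum; congr (_, _).
  - rewrite -(TD linT) -scalerDr addrACA subrr addr0 half2 //.
  - rewrite opprK -(TN linB) -(TD linB) -(TN linT) -(TD linT).
    have -> : - ((2 : R)^-1 *: (x.1 + A x.2)) + (2 : R)^-1 *: (x.1 - A x.2) = - A x.2.
      rewrite -scalerN -scalerDr opprD addrACA addNr add0r -opprD scalerN half2 //.
    by rewrite (TN linT) hTA (TN linB) BB opprK.
- move=> heq X Y A B hX hY hA hB.
  rewrite /conj_ideal.
  rewrite -(heq X Y _ _ hX hY (iopN hX hA) (iopN hY hB)) -(heq X Y A B hX hY hA hB).
  apply/seteqP; split => T [h1 h2]; split => // x; have [[lin _] _] := h2.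
  + by have := h1 x; rewrite (TN lin) => /oppr_inj.
  + by rewrite (TN lin) h1.
Qed.
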